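(* An integral domain $D$ is a PvMD if and only if $D$ is essential and $\mathcal{E}(D)$ is closed in $\operatorname{Spec}(D)$ with respect to the constructible topology.
   Context: All rings are commutative with identity. For an integral domain $D$ with quotient field $K$ and nonzero fractional ideal $I$: $(D:I)=\{x\in K:xI\subseteq D\}$, $I^v=(D:(D:I))$, $I^t=\bigcup\{J^v:J\subseteq I \text{ finitely generated}\}$; $t$-ideals are $(0)$ and ideals with $I=I^t$; $t$-maximal ideals are $t$-ideals maximal among proper $t$-ideals. $D$ is a PvMD if $D_{\mathfrak m}$ is a valuation domain for all $t$-maximal $\mathfrak m$. A valuation overring is essential if it equals $D_{\mathfrak p}$ for a prime $\mathfrak p$; $D$ is essential if it is the intersection of a family of essential valuation overrings. $\mathcal{E}(D)=\{\mathfrak p\in\operatorname{Spec}(D): D_{\mathfrak p}\text{ is a valuation domain}\}$. The constructible topology on $\operatorname{Spec}(D)$ is the coarsest topology making every $D(f)=\{\mathfrak p:f\notin\mathfrak p\}$ clopen. *)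

(* Defs.v *)
From HB Require Import structures.
From mathcomp Require Import all_boot all_order all_algebra.
Set Implicit Arguments. Unset Strict Implicit. Unset Printing Implicit Defensive.
Import GRing.Theory.
Local Open Scope ring_scope.

Section Defs.
Variable D : idomainType.

Definition QF := {fraction D}.
Definition emb (d : D) : QF := @FracField.tofrac D d.

Definition inD (x : QF) : Prop := exists d : D, x = emb d.

Definition is_ideal (I : D -> Prop) : Prop :=
  I 0 /\ (forall x y, I x -> I y -> I (x - y)) /\ (forall a x, I x -> I (a * x)).

Definition is_prime (p : D -> Prop) : Prop :=
  is_ideal p /\ ~ p 1 /\ (forall x y, p (x * y) -> p x \/ p y).

Definition embI (I : D -> Prop) (x : QF) : Prop := exists d, I d /\ x = emb d.

Definition colon (A : QF -> Prop) (x : QF) : Prop := forall a, A a -> inD (x * a).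

Definition vclos (A : QF -> Prop) : QF -> Prop := colon (colon A).

Definition span (s : seq QF) (x : QF) : Prop :=
  exists c : 'I_(size s) -> D, x = \sum_(i < size s) emb (c i) * s`_i.

Definition tclos (I : QF -> Prop) (x : QF) : Prop :=
  exists s : seq QF, (forall y, y \in s -> I y) /\ vclos (span s) x.

Definition is_t_ideal (I : D -> Prop) : Prop :=
  is_ideal I /\
  ((forall x, I x -> x = 0) \/ (forall x : QF, tclos (embI I) x <-> embI I x)).

Definition is_t_maximal (m : D -> Prop) : Prop :=
  is_t_ideal m /\ ~ m 1 /\
  (forall J : D -> Prop, is_t_ideal J -> ~ J 1 -> (forall x, m x -> J x) ->
     forall x, J x -> m x).

Definition loc (p : D -> Prop) (x : QF) : Prop :=
  exists a b : D, ~ p b /\ x = emb a / emb b.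

(* an overring V (D subset V subset K, quotient field K) is a valuation domain *)
Definition is_valuation (V : QF -> Prop) : Prop :=
  forall x : QF, x != 0 -> V x \/ V x^-1.

Definition is_subring (V : QF -> Prop) : Prop :=
  V 1 /\ (forall x y, V x -> V y -> V (x - y)) /\ (forall x y, V x -> V y -> V (x * y)).

Definition is_overring (V : QF -> Prop) : Prop :=
  is_subring V /\ (forall d, V (emb d)).

Definition PvMD : Prop :=
  forall m, is_t_maximal m -> is_valuation (loc m).

Definition is_essential_valuation_overring (V : QF -> Prop) : Prop :=
  is_overring V /\ is_valuation V /\
  exists p, is_prime p /\ (forall x, V x <-> loc p x).

Definition essential : Prop :=
  exists F : (QF -> Prop) -> Prop,
    (forall V, F V -> is_essential_valuation_overring V) /\
    (forall x : QF, inD x <-> (forall V, F V -> V x)).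

Definition Spec : Type := {p : D -> Prop | is_prime p}.

Definition EE (P : Spec) : Prop := is_valuation (loc (proj1_sig P)).

Definition Dopen (f : D) (P : Spec) : Prop := ~ proj1_sig P f.

End Defs.

Inductive gen_open (X : Type) (S : (X -> Prop) -> Prop) : (X -> Prop) -> Prop :=
  | go_sub U : S U -> gen_open S U
  | go_full : gen_open S (fun _ => True)
  | go_inter U V : gen_open S U -> gen_open S V -> gen_open S (fun x => U x /\ V x)
  | go_union (F : (X -> Prop) -> Prop) :
      (forall U, F U -> gen_open S U) -> gen_open S (fun x => exists U, F U /\ U x)
  | go_ext U V : (forall x, U x <-> V x) -> gen_open S U -> gen_open S V.

(* constructible topology on Spec(D): coarsest topology in which every D(f) is
   clopen, i.e. generated by the sets D(f) and their complements *)
Definition constructible_subbasis (D : idomainType) (U : Spec D -> Prop) : Prop :=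
  exists f : D, (forall P, U P <-> Dopen f P) \/ (forall P, U P <-> ~ Dopen f P).

Definition constructible_open (D : idomainType) : (Spec D -> Prop) -> Prop :=
  gen_open (@constructible_subbasis D).

Definition constructible_closed (D : idomainType) (C : Spec D -> Prop) : Prop :=
  constructible_open (fun P => ~ C P).

(* Main.v *)
Require Import Defs.
From HB Require Import structures.
From mathcomp Require Import all_boot all_order all_algebra generic_quotient.
From mathcomp Require Import ring.
From mathcomp Require Import boolp classical_sets filter.
From Stdlib Require Import Classical.
Set Implicit Arguments. Unset Strict Implicit. Unset Printing Implicit Defensive.
Import GRing.Theory.
Local Open Scope ring_scope.
Local Open Scope quotient_scope.

Section Fid.
Variable F : fieldType.
Implicit Types x y z w : F.
Lemma fid_B x y z w : y != 0 -> w != 0 -> x / y - z / w = (x * w - z * y) / (y * w).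
Proof. by move=> n1 n2; field; apply/andP. Qed.
Lemma fid_cd x y z : x != 0 -> (x * y) * (z / x) = y * z.
Proof. by move=> n; field. Qed.
Lemma fid_tr x y z : y != 0 -> x / z = (x / y) * (y / z).
Proof. move=> n. rewrite mulrA divfK //. Qed.
End Fid.
Lemma frac_surj (D : idomainType) (x : QF D) : exists a b : D, b != 0 /\ x = emb a / emb b.
Proof.
elim/quotW: x => r.
exists (\n_r), (\d_r); have hd := denom_ratioP r; split => //.
rewrite /emb.
change (\pi_(FracField.type D) r = FracField.mul (FracField.tofrac \n_r) (FracField.inv (FracField.tofrac \d_r))).
rewrite !piE.
apply/eqmodP. rewrite /= FracField.equivfE /FracField.mulf /FracField.invf.
rewrite !numden_Ratio ?oner_neq0 ?mulf_neq0 ?oner_neq0 //.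
by rewrite !mulr1 mul1r mulrC.
Qed.

Section Basics.
Variable D : idomainType.
Local Notation K := (QF D).
Local Notation emb := (@emb D).
Local Notation inD := (@inD D).

Lemma embD a b : emb (a + b) = emb a + emb b. Proof. exact: tofracD. Qed.
Lemma embB a b : emb (a - b) = emb a - emb b. Proof. exact: tofracB. Qed.
Lemma embM a b : emb (a * b) = emb a * emb b. Proof. exact: tofracM. Qed.
Lemma emb1 : emb 1 = 1. Proof. exact: tofrac1. Qed.
Lemma emb0 : emb 0 = 0. Proof. exact: tofrac0. Qed.
Lemma embX a n : emb (a ^+ n) = emb a ^+ n. Proof. exact: tofracXn. Qed.
Lemma emb_inj a b : emb a = emb b -> a = b.
Proof. by move=> h; apply/eqP; rewrite -tofrac_eq; apply/eqP. Qed.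
Lemma emb_neq0 a : a != 0 -> emb a != 0.
Proof. by rewrite /emb tofrac_eq0. Qed.

Lemma inD_emb d : inD (emb d). Proof. by exists d. Qed.
Lemma inD0 : inD (0 : K). Proof. by exists 0; rewrite emb0. Qed.
Lemma inD1 : inD (1 : K). Proof. by exists 1; rewrite emb1. Qed.
Lemma inDB x y : inD x -> inD y -> inD (x - y).
Proof. by move=> [a ->] [b ->]; exists (a - b); rewrite embB. Qed.
Lemma inDD x y : inD x -> inD y -> inD (x + y).
Proof. by move=> [a ->] [b ->]; exists (a + b); rewrite embD. Qed.
Lemma inDM x y : inD x -> inD y -> inD (x * y).
Proof. by move=> [a ->] [b ->]; exists (a * b); rewrite embM. Qed.

Lemma inD_sum (I : finType) (F : I -> K) : (forall i, inD (F i)) -> inD (\sum_i F i).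
Proof.
move=> h; apply: (big_ind inD) => //; [exact: inD0 | exact: inDD].
Qed.

End Basics.

Section Colon.
Variable D : idomainType.
Local Notation K := (QF D).
Local Notation emb := (@emb D).
Local Notation inD := (@inD D).

Lemma colon_span (s : seq K) u :
  Defs.colon (Defs.span s) u <-> (forall y, y \in s -> inD (u * y)).
Proof.
split.
- move=> h y ys; have hi : (index y s < size s)%N by rewrite index_mem.
  apply: h; exists (fun j : 'I_(size s) => if j == Ordinal hi then 1 else 0).
  rewrite (bigD1 (Ordinal hi)) //= eqxx emb1 mul1r big1 ?addr0 ?nth_index //.
  by move=> j /negPf ->; rewrite emb0 mul0r.
- move=> h a [c ->]; rewrite mulr_sumr; apply: inD_sum => i.
  rewrite mulrCA; apply: inDM; first exact: inD_emb.
  by apply: h; apply: mem_nth.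
Qed.

Definition Vd (gs : seq D) (x : K) :=
  forall u, (forall g, g \in gs -> inD (u * emb g)) -> inD (x * u).

Lemma tclos_embI (P : D -> Prop) x :
  tclos (embI P) x <-> exists gs, (forall g, g \in gs -> P g) /\ Vd gs x.
Proof.
split.
- move=> [s [hs hv]].
  have [gs [egs hgs]] : exists gs, s = map emb gs /\ (forall g, g \in gs -> P g); last first.
    subst s.
    exists gs; split => // u hu; apply: hv; apply/colon_span => y /mapP[g gin ->].
    exact: hu.
    elim: s hs {hv} => [|y s IH] hs; first by exists [::].
    have [|gs [e hgs]] := IH; first by move=> z zs; apply: hs; rewrite inE zs orbT.
    have [d [Pd ->]] := hs y (mem_head _ _).
    exists (d :: gs); split; first by rewrite e.
    by move=> g; rewrite inE => /orP[/eqP -> //|]; apply: hgs.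
- move=> [gs [hgs hv]]; exists (map emb gs); split.
    by move=> y /mapP[g gin ->]; exists g; split => //; apply: hgs.
  move=> a /colon_span ha; apply: hv => g gin; apply: ha; apply/mapP; by exists g.
Qed.

Lemma Vd_inD gs x : Vd gs x -> inD x.
Proof.
move=> h; rewrite -[x]mulr1; apply: h => g _; rewrite mul1r; exact: inD_emb.
Qed.

Lemma Vd_mem gs g : g \in gs -> Vd gs (emb g).
Proof. by move=> gin u hu; rewrite mulrC; apply: hu. Qed.

Lemma Vd_sub gs hs x : (forall g, g \in gs -> Vd hs (emb g)) -> Vd gs x -> Vd hs x.
Proof.
move=> hg hv u hu; apply: hv => g gin; rewrite mulrC; exact: hg.
Qed.

Lemma Vd_mono gs hs x : {subset gs <= hs} -> Vd gs x -> Vd hs x.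
Proof. by move=> sub; apply: Vd_sub => g gin; apply: Vd_mem; apply: sub. Qed.

Lemma Vd_B gs x y : Vd gs x -> Vd gs y -> Vd gs (x - y).
Proof. by move=> hx hy u hu; rewrite mulrBl; apply: inDB; [apply: hx|apply: hy]. Qed.

Lemma Vd_Ml gs a x : Vd gs x -> Vd gs (emb a * x).
Proof. by move=> hx u hu; rewrite -mulrA; apply: inDM; [apply: inD_emb|apply: hx]. Qed.

Lemma Vd_0 gs : Vd gs 0.
Proof. by move=> u _; rewrite mul0r; apply: inD0. Qed.

Definition TC (P : D -> Prop) :=
  forall gs, (forall g, g \in gs -> P g) -> forall d, Vd gs (emb d) -> P d.

Definition zeroI (P : D -> Prop) := forall x, P x -> x = 0.

Lemma t_idealE P : is_t_ideal P <-> is_ideal P /\ (zeroI P \/ TC P).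
Proof.
rewrite /is_t_ideal; split => -[hI h]; split => //; case: h => h; [by left| |by left|].
- right => gs hgs d hv.
  have /h [d' [Pd' e]] : tclos (embI P) (emb d).
    by apply/tclos_embI; exists gs.
  by rewrite (emb_inj e).
- right => x; split.
  + move=> /tclos_embI [gs [hgs hv]]; have [d e] := Vd_inD hv.
    by exists d; split => //; apply: (h gs) => //; rewrite -e.
  + move=> [d [Pd ->]]; apply/tclos_embI; exists [:: d]; split.
      by move=> g; rewrite inE => /eqP ->.
    by apply: Vd_mem; rewrite inE.
Qed.

End Colon.

Section Loc.
Variable D : idomainType.
Local Notation K := (QF D).
Local Notation emb := (@emb D).
Local Notation inD := (@inD D).
Local Notation loc := (@loc D).

Section Pr.
Variable P : D -> Prop.
Hypothesis pr : is_prime P.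

Lemma pr0 : P 0. Proof. by case: pr => -[]. Qed.
Lemma pr1 : ~ P 1. Proof. by case: pr => _ []. Qed.
Lemma prB x y : P x -> P y -> P (x - y). Proof. by case: pr => -[_ [h _]] _; apply: h. Qed.
Lemma prMl a x : P x -> P (a * x). Proof. by case: pr => -[_ [_ h]] _; apply: h. Qed.
Lemma prMr a x : P x -> P (x * a). Proof. by rewrite mulrC; apply: prMl. Qed.
Lemma prN x : P x -> P (- x). Proof. by move=> h; rewrite -sub0r; apply: prB => //; apply: pr0. Qed.
Lemma prD x y : P x -> P y -> P (x + y).
Proof. by move=> hx hy; rewrite -[y]opprK; apply: prB => //; apply: prN. Qed.
Lemma prP x y : P (x * y) -> P x \/ P y. Proof. by case: pr => _ [_ h]; apply: h. Qed.
Lemma prM x y : ~ P x -> ~ P y -> ~ P (x * y).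
Proof. by move=> hx hy /prP []. Qed.
Lemma pr_nz b : ~ P b -> b != 0.
Proof. by move=> h; apply/eqP => e; apply: h; rewrite e; apply: pr0. Qed.
Lemma prX x n : P (x ^+ n) -> P x.
Proof.
elim: n => [|n IH]; first by rewrite expr0 => /pr1.
by rewrite exprS => /prP [] // /IH.
Qed.

Lemma loc_emb d : loc P (emb d).
Proof. by exists d, 1; split; [apply: pr1|rewrite emb1 divr1]. Qed.
Lemma loc_inD x : inD x -> loc P x.
Proof. by move=> [d ->]; apply: loc_emb. Qed.
Lemma loc_M x y : loc P x -> loc P y -> loc P (x * y).
Proof.
move=> [a1 [b1 [h1 ->]]] [a2 [b2 [h2 ->]]]; exists (a1 * a2), (b1 * b2); split.
  exact: prM.
by rewrite !embM invfM mulrACA.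
Qed.
Lemma loc_B x y : loc P x -> loc P y -> loc P (x - y).
Proof.
move=> [a1 [b1 [h1 ->]]] [a2 [b2 [h2 ->]]]; exists (a1 * b2 - a2 * b1), (b1 * b2); split.
  exact: prM.
have n1 := emb_neq0 (pr_nz h1); have n2 := emb_neq0 (pr_nz h2).
by rewrite embB !embM; apply: fid_B.
Qed.
Lemma loc_div a s : ~ P s -> loc P (emb a / emb s).
Proof. by move=> h; exists a, s. Qed.
Lemma loc_inv a s : ~ P a -> loc P (emb s / emb a).
Proof. by move=> h; exists s, a. Qed.

Lemma loc_subring : is_overring (loc P).
Proof.
split; last exact: loc_emb.
split; first by rewrite -emb1; apply: loc_emb.
by split => x y; [apply: loc_B|apply: loc_M].
Qed.

Lemma comden (xs : seq K) : (forall x, x \in xs -> loc P x) ->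
  exists s, ~ P s /\ forall x, x \in xs -> inD (emb s * x).
Proof.
elim: xs => [|x xs IH] h; first by exists 1; split => //; apply: pr1.
have [|s [hs hx]] := IH; first by move=> y yin; apply: h; rewrite inE yin orbT.
have [a [b [hb ex]]] := h x (mem_head _ _).
exists (b * s); split; first exact: prM.
move=> y; rewrite inE => /orP [/eqP -> | yin].
  rewrite ex; have nb := emb_neq0 (pr_nz hb).
  have -> : emb (b * s) * (emb a / emb b) = emb (s * a).
    by rewrite !embM; apply: fid_cd.
  exact: inD_emb.
by rewrite embM -mulrA; apply: inDM; [apply: inD_emb|apply: hx].
Qed.

Hypothesis val : is_valuation (loc P).

Lemma val_max (gs : seq D) : (exists g, g \in gs /\ g != 0) ->
  exists g0, [/\ g0 \in gs, g0 != 0 & forall g, g \in gs -> loc P (emb g / emb g0)].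
Proof.
elim: gs => [|h t IH]; first by case=> g [].
move=> hex.
have [tnz|tz] := classic (exists g, g \in t /\ g != 0).
- have [g1 [g1in g1nz hg1]] := IH tnz.
  have n1 := emb_neq0 g1nz.
  have [->|hnz] := eqVneq h 0.
    exists g1; split => //; first by rewrite inE g1in orbT.
    move=> g; rewrite inE => /orP [/eqP ->| /hg1 //].
    by rewrite emb0 mul0r -emb0; apply: loc_emb.
  have nh := emb_neq0 hnz.
  have [hv|hv] := val (mulf_neq0 nh (invr_neq0 n1)).
    exists g1; split => //; first by rewrite inE g1in orbT.
    by move=> g; rewrite inE => /orP [/eqP ->| /hg1 //].
  rewrite invf_div in hv.
  exists h; split => //; first by rewrite inE eqxx.
  move=> g; rewrite inE => /orP [/eqP ->| /hg1 hg].
    by rewrite divff // -emb1; apply: loc_emb.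
  have -> : emb g / emb h = (emb g / emb g1) * (emb g1 / emb h) by apply: fid_tr.
  exact: loc_M.
- have hnz : h != 0.
    case: hex => g [] ; rewrite inE => /orP [/eqP -> //|gin gnz].
    by exfalso; apply: tz; exists g.
  have nh := emb_neq0 hnz.
  exists h; split => //; first by rewrite inE eqxx.
  move=> g; rewrite inE => /orP [/eqP ->| gin].
    by rewrite divff // -emb1; apply: loc_emb.
  have -> : g = 0 by apply: contrapT => /eqP gnz; apply: tz; exists g.
  by rewrite emb0 mul0r -emb0; apply: loc_emb.
Qed.

End Pr.

Lemma loc_all (P : D -> Prop) x : zeroI P -> loc P x.
Proof.
move=> hz; have [a [b [hb ->]]] := frac_surj x; exists a, b; split => //.
by move=> /hz e; rewrite e eqxx in hb.
Qed.

Lemma loc_mono (P Q : D -> Prop) x : (forall y, Q y -> P y) -> loc P x -> loc Q x.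
Proof. by move=> sub [a [b [hb ->]]]; exists a, b; split => // /sub. Qed.

Lemma val_mono (P Q : D -> Prop) : (forall y, Q y -> P y) ->
  is_valuation (loc P) -> is_valuation (loc Q).
Proof. by move=> sub hv x /hv [] h; [left|right]; apply: loc_mono h. Qed.

End Loc.

Section TMax.
Variable D : idomainType.
Local Notation K := (QF D).
Local Notation emb := (@emb D).
Local Notation inD := (@inD D).
Local Notation loc := (@loc D).

Lemma val_TC (P : D -> Prop) : is_prime P -> is_valuation (loc P) ->
  (exists z : K, ~ inD z) ->
  forall gs b, (forall g, g \in gs -> P g) -> Vd gs (emb b) -> P b.
Proof.
move=> pr val [z nz] gs b hgs hv.
apply: NNPP => nPb.
have [hex|hz] := classic (exists g, g \in gs /\ g != 0).
- have [g0 [g0in g0nz hg0]] := val_max pr val hex.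
  have n0 := emb_neq0 g0nz.
  have [|s [hs hsx]] := comden pr (xs := map (fun g => emb g / emb g0) gs).
    by move=> x /mapP [g gin ->]; apply: hg0.
  have [d ed] : inD (emb b * (emb s / emb g0)).
    apply: hv => g gin.
    have -> : emb s / emb g0 * emb g = emb s * (emb g / emb g0).
      by rewrite mulrAC -mulrA.
    by apply: hsx; apply/mapP; exists g.
  have e2 : emb (b * s) = emb (d * g0).
    by rewrite !embM -ed mulrA divfK.
  have := emb_inj e2 => e3.
  have : P (b * s) by rewrite e3; apply: prMl; [exact: pr|apply: hgs].
  by move=> /(prP pr) [].
- have bnz : b != 0 by apply: pr_nz nPb.
  have nb := emb_neq0 bnz.
  apply: nz.
  have -> : z = emb b * (z / emb b) by rewrite mulrC divfK.
  apply: hv => g gin.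
  have -> : g = 0 by apply: contrapT => /eqP gnz; apply: hz; exists g.
  by rewrite emb0 mulr0; apply: inD0.
Qed.

Lemma tmax_exists (I : D -> Prop) : is_ideal I -> TC I -> ~ I 1 ->
  exists m, is_t_maximal m /\ forall x, I x -> m x.
Proof.
move=> iI tI nI.
pose good (A : D -> Prop) := [/\ is_ideal A, TC A, ~ A 1 & forall x, I x -> A x].
pose PP := fun A : set D => good A \/ A = set0.
have [A [PA Amax]] : exists A, PP A /\ forall B, (A `<` B)%classic -> ~ PP B.
  apply: Zorn_bigcup => F FP Ftot.
  have [[X0 [x0 [FX0 X0x]]]|no] := classic (exists X x, F X /\ X x); last first.
    right; rewrite predeqE => x; split => // -[X FX Xx].
    by apply: no; exists X, x.
  have gd : forall X x, F X -> X x -> good X.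
    move=> X x FX Xx; case: (FP X FX) => // e; by rewrite e in Xx.
  have g0 := gd _ _ FX0 X0x.
  have one : forall gs : seq D, (forall g, g \in gs -> (\bigcup_(X in F) X)%classic g) ->
      exists X, [/\ F X, good X & forall g, g \in gs -> X g].
    elim => [|g gs IH] hgs; first by exists X0.
    have [|X2 [FX2 gX2 h2]] := IH; first by move=> y yin; apply: hgs; rewrite inE yin orbT.
    have [X1 FX1 X1g] := hgs g (mem_head _ _).
    have gX1 := gd _ _ FX1 X1g.
    case: (Ftot _ _ FX1 FX2) => sub.
      exists X2; split => // y; rewrite inE => /orP [/eqP -> |/h2 //].
      exact: sub.
    exists X1; split => // y; rewrite inE => /orP [/eqP -> //|/h2].
    exact: sub.
  left; split.
  - split; first by exists X0 => //; case: g0 => -[].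
    split.
      move=> x y hx hy; have [|X [FX [[_ [hX _]] _ _ _] hxy]] := one [:: x; y].
        by move=> g; rewrite !inE => /orP [/eqP ->|/eqP ->].
      by exists X => //; apply: hX; apply: hxy; rewrite !inE eqxx ?orbT.
    move=> a x [X FX Xx]; exists X => //; have [[_ [_ h]] _ _ _] := gd _ _ FX Xx.
    exact: h.
  - move=> gs hgs d hv; have [X [FX [_ tX _ _] hX]] := one gs hgs.
    by exists X => //; apply: (tX gs).
  - by move=> [X FX X1]; have [_ _ h _] := gd _ _ FX X1.
  - by move=> x Ix; exists X0 => //; case: g0 => _ _ _; apply.
have gA : good A.
  case: PA => // e; exfalso; apply: (Amax I); last by left.
  rewrite e; split => // sub; exact: (sub 0 (proj1 iI)).
case: gA => iA tA nA IA.
exists A; split => //; split.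
  by apply/t_idealE; split => //; right.
split => // J tJ nJ AJ x Jx.
apply: NNPP => nAx.
case/t_idealE: tJ => iJ [zJ|tJ].
  by apply: nAx; rewrite (zJ x Jx); apply: (proj1 iA).
apply: (Amax J); last by left; split => // y /IA /AJ.
split => // sub; exact: (nAx (sub x Jx)).
Qed.

End TMax.

Section TPrime.
Variable D : idomainType.
Local Notation K := (QF D).
Local Notation emb := (@emb D).
Local Notation inD := (@inD D).
Local Notation loc := (@loc D).

Section Id.
Variable I : D -> Prop.
Hypothesis iI : is_ideal I.
Lemma id0 : I 0. Proof. by case: iI. Qed.
Lemma idB x y : I x -> I y -> I (x - y). Proof. by case: iI => _ [h _]; apply: h. Qed.
Lemma idMl a x : I x -> I (a * x). Proof. by case: iI => _ [_ h]; apply: h. Qed.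
Lemma idD x y : I x -> I y -> I (x + y).
Proof.
move=> hx hy; have hN : I (- y) by rewrite -sub0r; apply: idB => //; apply: id0.
by rewrite -[y]opprK; apply: idB.
Qed.
End Id.

Lemma tmax_prime (m : D -> Prop) : is_t_maximal m -> is_prime m.
Proof.
move=> [tm [n1 mx]]; have [im [zm|tcm]] := proj1 (t_idealE m) tm.
  split; first exact: im; split; first exact: n1.
  move=> x y /zm /eqP; rewrite mulf_eq0 => /orP [] /eqP ->;
  [left|right]; apply: id0; exact: im.
split; first exact: im; split; first exact: n1.
move=> x y hxy.
have [mxx|nmx] := classic (m x); [by left | right].
pose Ma := fun z => exists h r, m h /\ z = h + r * x.
pose T := fun d => exists gs, (forall g, g \in gs -> Ma g) /\ Vd gs (emb d).
have iT : is_ideal T.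
  split; first by exists [::]; split => //; rewrite emb0; apply: Vd_0.
  split.
    move=> a b [g1 [h1 v1]] [g2 [h2 v2]]; exists (g1 ++ g2); split.
      by move=> g; rewrite mem_cat => /orP [/h1|/h2].
    rewrite embB; apply: Vd_B; apply: Vd_mono; try eassumption;
    by move=> g gin; rewrite mem_cat gin ?orbT.
  by move=> a b [g1 [h1 v1]]; exists g1; split => //; rewrite embM; apply: Vd_Ml.
have tT : TC T.
  move=> hs hhs d hv.
  have [G [hG vG]] : exists G, (forall g, g \in G -> Ma g) /\
      forall h, h \in hs -> Vd G (emb h).
    elim: hs hhs {hv} => [|h hs IH] hhs; first by exists [::].
    have [|G [hG vG]] := IH; first by move=> y' yin; apply: hhs; rewrite inE yin orbT.
    have [g1 [h1 v1]] := hhs h (mem_head _ _).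
    exists (g1 ++ G); split; first by move=> g; rewrite mem_cat => /orP [/h1|/hG].
    move=> y'; rewrite inE => /orP [/eqP ->|/vG v].
      by apply: Vd_mono v1 => g gin; rewrite mem_cat gin.
    by apply: Vd_mono v => g gin; rewrite mem_cat gin orbT.
  by exists G; split => //; apply: Vd_sub vG hv.
have T1 : T 1.
  apply: NNPP => nT.
  apply: nmx; apply: (mx T) => //.
  - by apply/t_idealE; split => //; right.
  - move=> h mh; exists [:: h]; split; last by apply: Vd_mem; rewrite inE.
    by move=> g; rewrite inE => /eqP ->; exists h, 0; rewrite mul0r addr0.
  - exists [:: x]; split; last by apply: Vd_mem; rewrite inE.
    by move=> g; rewrite inE => /eqP ->; exists 0, 1; rewrite mul1r add0r; split => //; apply: id0.
have [gs [hgs v1]] := T1.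
apply: (tcm (map (fun g => y * g) gs)).
  move=> z /mapP [g gin ->]; have [h [r [mh ->]]] := hgs g gin.
  rewrite mulrDr; apply: idD => //; first by apply: idMl.
  have -> : y * (r * x) = r * (x * y) by rewrite mulrCA (mulrC y).
  exact: idMl.
move=> u hu; rewrite -[_ * u]mul1r -emb1; apply: v1 => g gin.
rewrite -mulrA mulrCA -embM; apply: hu; apply/mapP; by exists g.
Qed.

End TPrime.

Section Topo.
Variable D : idomainType.
Local Notation K := (QF D).
Local Notation emb := (@emb D).
Local Notation inD := (@inD D).
Local Notation loc := (@loc D).
Local Notation SP := (Spec D).

Definition bas (gs : seq D) (f : D) (Q : SP) :=
  (forall g, g \in gs -> proj1_sig Q g) /\ ~ proj1_sig Q f.

Lemma bas_open gs f : constructible_open (bas gs f).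
Proof.
elim: gs => [|g gs IH].
  apply: (@go_ext _ _ (fun P => Dopen f P)); last first.
    by apply: go_sub; exists f; left.
  by move=> P; split => [h|[]//]; split.
apply: (@go_ext _ _ (fun P => ~ Dopen g P /\ bas gs f P)); last first.
  apply: go_inter => //; apply: go_sub; exists g; right => P; split => //.
move=> P; split.
  move=> [/NNPP hg [hgs hf]]; split => // y; rewrite inE => /orP [/eqP ->//|].
  exact: hgs.
move=> [hgs hf]; split; first by move=> h; apply: h; apply: hgs; rewrite inE eqxx.
by split => // y yin; apply: hgs; rewrite inE yin orbT.
Qed.

Lemma open_of_bas (U : SP -> Prop) :
  (forall P, U P -> exists gs f, bas gs f P /\ forall Q, bas gs f Q -> U Q) ->
  constructible_open U.
Proof.
move=> h.
apply: (@go_ext _ _ (fun x => exists W, (fun W => exists gs f,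
  W = bas gs f /\ forall Q, bas gs f Q -> U Q) W /\ W x)); last first.
  by apply: go_union => W [gs [f [-> _]]]; apply: bas_open.
move=> P; split.
  by move=> [W [[gs [f [-> hW]]] hP]]; apply: hW.
move=> /h [gs [f [hP hQ]]]; exists (bas gs f); split => //.
by exists gs, f.
Qed.

Lemma bas_of_open (U : SP -> Prop) : constructible_open U ->
  forall P, U P -> exists gs f, bas gs f P /\ forall Q, bas gs f Q -> U Q.
Proof.
elim => {U}.
- move=> U [f [hf|hf]] P UP.
    exists [::], f; split; first by split => //; apply/hf.
    by move=> Q [_ hQ]; apply/hf.
  exists [:: f], 1; split.
    split; last exact: (pr1 (proj2_sig P)).
    by move=> g; rewrite inE => /eqP ->; apply: NNPP; move/hf: UP.
  by move=> Q [hQ _]; apply/hf => /(_ (hQ f (mem_head _ _))).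
- move=> P _; exists [::], 1; split => //; split => //.
  exact: (pr1 (proj2_sig P)).
- move=> U V _ hU _ hV P [/hU [g1 [f1 [b1 q1]]] /hV [g2 [f2 [b2 q2]]]].
  exists (g1 ++ g2), (f1 * f2); split.
    split; first by move=> g; rewrite mem_cat => /orP [/(proj1 b1)|/(proj1 b2)].
    exact: (prM (proj2_sig P) (proj2 b1) (proj2 b2)).
  move=> Q [hQ nQ]; split.
    apply: q1; split; first by move=> g gin; apply: hQ; rewrite mem_cat gin.
    by move=> h; apply: nQ; apply: prMr => //; exact: (proj2_sig Q).
  apply: q2; split; first by move=> g gin; apply: hQ; rewrite mem_cat gin orbT.
  by move=> h; apply: nQ; apply: prMl => //; exact: (proj2_sig Q).
- move=> F _ hF P [W [FW WP]].
  have [gs [f [b q]]] := hF W FW P WP.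
  by exists gs, f; split => // Q /q WQ; exists W.
- move=> U V hUV _ hU P /hUV /hU [gs [f [b q]]].
  by exists gs, f; split => // Q /q /hUV.
Qed.

End Topo.

Section Fwd.
Variable D : idomainType.
Local Notation K := (QF D).
Local Notation emb := (@emb D).
Local Notation inD := (@inD D).
Local Notation loc := (@loc D).
Local Notation SP := (Spec D).

Lemma pvmd_ess : PvMD D -> essential D.
Proof.
move=> hP.
exists (fun V => exists m, is_t_maximal m /\ forall x, V x <-> loc m x); split.
  move=> V [m [tm hV]]; have -> : V = loc m by rewrite predeqE.
  have pm := tmax_prime tm.
  split; first exact: loc_subring.
  split; first exact: hP.
  by exists m; split.
move=> x; split.
  by move=> hx V [m [tm ->]]; apply: loc_inD => //; apply: tmax_prime.
move=> hall.
pose I := fun d => inD (emb d * x).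
have iI : is_ideal I.
  split; first by rewrite /I emb0 mul0r; apply: inD0.
  split; first by move=> a b ha hb; rewrite /I embB mulrBl; apply: inDB.
  by move=> a b hb; rewrite /I embM -mulrA; apply: inDM => //; apply: inD_emb.
have tI : TC I.
  by move=> gs hgs d hv; apply: hv => g gin; rewrite mulrC; apply: hgs.
have [I1|nI1] := classic (I 1); first by move: I1; rewrite /I emb1 mul1r.
have [m [tm Im]] := tmax_exists iI tI nI1.
have pm := tmax_prime tm.
have : loc m x by apply: hall; exists m; split.
move=> [a [b [hb ex]]]; exfalso.
have nb := emb_neq0 (pr_nz pm hb).
apply: hb; apply: Im.
by rewrite /I ex mulrC divfK //; apply: inD_emb.
Qed.

Lemma pvmd_closed : PvMD D -> constructible_closed (@EE D).
Proof.
move=> hP; apply: open_of_bas => -[P pP] /= nE.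
have nf : exists z : K, ~ inD z.
  apply: NNPP => h; apply: nE => z _; left; apply: loc_inD => //.
  by apply: NNPP => hz; apply: h; exists z.
have nTC : ~ TC P.
  move=> tP; have [m [tm Pm]] := tmax_exists (proj1 pP) tP (pr1 pP).
  by apply: nE; apply: (val_mono Pm); apply: hP.
have [gs [hgs [d [hv nd]]]] : exists gs, (forall g, g \in gs -> P g) /\
    exists d, Vd gs (emb d) /\ ~ P d.
  apply: NNPP => h; apply: nTC => gs hgs d hv; apply: NNPP => nd.
  by apply: h; exists gs; split => //; exists d.
exists gs, d; split; first by split.
move=> [Q pQ] [/= hQ nQ] /= EQ; apply: nQ.
exact: (val_TC pQ EQ nf hQ hv).
Qed.

End Fwd.

Section Fid2.
Variable F : fieldType.
Implicit Types x y z w u v : F.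
Lemma fid_div1 x y : y != 0 -> x / y = 1 -> x = y.
Proof. by move=> n e; rewrite -(divfK n x) e mul1r. Qed.
Lemma fid_one x y u v : x != 0 -> y != 0 -> u != 0 -> v != 0 ->
  (x * y) / (u * v) * (u / x) * (v / y) = 1.
Proof. by move=> n1 n2 n3 n4; field; rewrite n1 n2 n3 n4. Qed.
Lemma fid_2 a u g : g != 0 -> a * u = (a / g) * (u * g).
Proof. by move=> n; field. Qed.
End Fid2.

Section LocM.
Variable D : idomainType.
Local Notation K := (QF D).
Local Notation emb := (@emb D).
Local Notation inD := (@inD D).
Local Notation loc := (@loc D).
Variable P : D -> Prop.
Hypothesis pr : is_prime P.

Definition locM (z : K) := exists a s, P a /\ ~ P s /\ z = emb a / emb s.

Lemma locM_0 : locM 0.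
Proof. by exists 0, 1; rewrite emb0 mul0r; split; [apply: pr0|split; [apply: pr1|]]. Qed.

Lemma locM_loc z : locM z -> loc P z.
Proof. by move=> [a [s [_ [hs ->]]]]; apply: loc_div. Qed.

Lemma locM_Mloc x y : locM x -> loc P y -> locM (x * y).
Proof.
move=> [a1 [s1 [h1 [n1 ->]]]] [a2 [s2 [n2 ->]]].
exists (a1 * a2), (s1 * s2); split; first exact: prMr.
split; first exact: prM.
by rewrite !embM invfM mulrACA.
Qed.

Lemma locM_B x y : locM x -> locM y -> locM (x - y).
Proof.
move=> [a1 [s1 [h1 [n1 ->]]]] [a2 [s2 [h2 [n2 ->]]]].
exists (a1 * s2 - a2 * s1), (s1 * s2); split.
  by apply: prB => //; apply: prMr.
split; first exact: prM.
have e1 := emb_neq0 (pr_nz pr n1); have e2 := emb_neq0 (pr_nz pr n2).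
by rewrite embB !embM; apply: fid_B.
Qed.

Lemma locM_Ml r x : locM x -> locM (emb r * x).
Proof.
move=> [a [s [h [n ->]]]]; exists (r * a), s; split; first exact: prMl.
by split => //; rewrite embM mulrA.
Qed.

Lemma locM_n1 : ~ locM 1.
Proof.
move=> [a [s [h [n e]]]].
have := fid_div1 (emb_neq0 (pr_nz pr n)) (esym e) => /emb_inj ea.
by apply: n; rewrite -ea.
Qed.

Hypothesis val : is_valuation (loc P).

Lemma val_notM z : z != 0 -> ~ locM z -> loc P z^-1.
Proof.
move=> nz nM; case: (val nz) => // -[a [s [ns ez]]].
have [Pa|nPa] := classic (P a); first by exfalso; apply: nM; exists a, s.
by rewrite ez invf_div; apply: loc_inv.
Qed.

Lemma val_notloc z : z != 0 -> ~ loc P z -> locM z^-1.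
Proof.
move=> nz nl; case: (val nz) => // -[a [s [ns ez]]].
have [Pa|nPa] := classic (P a); first by exists a, s.
exfalso; apply: nl; rewrite -[z]invrK ez invf_div; exact: loc_inv.
Qed.

End LocM.

Section Bwd.
Variable D : idomainType.
Local Notation K := (QF D).
Local Notation emb := (@emb D).
Local Notation inD := (@inD D).
Local Notation loc := (@loc D).
Local Notation SP := (Spec D).

Variables (gs : seq D) (f : D).
Hypothesis fnz : f != 0.
Hypothesis hex : exists g, g \in gs /\ g != 0.
Hypothesis H : forall Q : SP, (forall g, g \in gs -> proj1_sig Q g) ->
  ~ proj1_sig Q f -> EE Q -> False.

Lemma embfn n : emb (f ^+ n) != 0.
Proof. by apply: emb_neq0; apply: expf_neq0. Qed.

Lemma step1 (P : D -> Prop) (pP : is_prime P) : is_valuation (loc P) ->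
  (forall g, g \in gs -> P g) ->
  exists n g, [/\ g \in gs, g != 0 & loc P (emb (f ^+ n) / emb g)].
Proof.
move=> val hgs.
have [g0 [g0in g0nz hg0]] := val_max pP val hex.
have n0 := emb_neq0 g0nz.
apply: NNPP => hno.
have nl : forall n, ~ loc P (emb (f ^+ n) / emb g0).
  by move=> n hl; apply: hno; exists n, g0.
have hM : forall n, locM P (emb g0 / emb (f ^+ n)).
  move=> n; rewrite -invf_div; apply: val_notloc => //.
  by rewrite mulf_neq0 ?invr_neq0 // embfn.
pose Q := fun d => forall n, locM P (emb d / emb (f ^+ n)).
have pQ : is_prime Q.
  split; first split.
  - by move=> n; rewrite emb0 mul0r; apply: locM_0.
  - split.
      by move=> x y hx hy n; rewrite embB mulrBl; apply: locM_B.
    by move=> a x hx n; rewrite embM -mulrA; apply: locM_Ml.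
  split.
    by move=> /(_ 0%N); rewrite !emb1 divr1; apply: locM_n1.
  move=> x y hxy; apply: NNPP => /not_or_and [nx ny].
  have [n1 h1] : exists n, ~ locM P (emb x / emb (f ^+ n)).
    by apply: NNPP => h; apply: nx => n; apply: NNPP => hn; apply: h; exists n.
  have [n2 h2] : exists n, ~ locM P (emb y / emb (f ^+ n)).
    by apply: NNPP => h; apply: ny => n; apply: NNPP => hn; apply: h; exists n.
  have xnz : emb x != 0.
    by apply/eqP => e; apply: h1; rewrite e mul0r; apply: locM_0.
  have ynz : emb y != 0.
    by apply/eqP => e; apply: h2; rewrite e mul0r; apply: locM_0.
  have l1 := val_notM val (mulf_neq0 xnz (invr_neq0 (embfn n1))) h1.
  have l2 := val_notM val (mulf_neq0 ynz (invr_neq0 (embfn n2))) h2.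
  rewrite invf_div in l1; rewrite invf_div in l2.
  apply: (locM_n1 pP).
  rewrite -(fid_one xnz ynz (embfn n1) (embfn n2)).
  apply: locM_Mloc => //; apply: locM_Mloc => //.
  by rewrite -!embM -exprD; apply: hxy.
have fQ : ~ Q f.
  by move=> /(_ 1%N); rewrite ?expr1 divff ?emb_neq0 //; apply: locM_n1.
have gQ : forall g, g \in gs -> Q g.
  move=> g gin n; rewrite (@fid_tr _ (emb g) (emb g0) (emb (f ^+ n)) n0) mulrC.
  by apply: locM_Mloc => //; apply: hg0.
have QP : forall x, Q x -> P x.
  move=> x /(_ 0%N) [a [s [Pa [ns e]]]].
  rewrite ?expr0 !emb1 divr1 in e.
  have ns0 := emb_neq0 (pr_nz pP ns).
  have : emb (x * s) = emb a by rewrite embM e divfK.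
  move=> /emb_inj exs; have : P (x * s) by rewrite exs.
  by move=> /(prP pP) [].
have HQ := @H (exist (@is_prime D) Q pQ); apply: HQ.
- exact: gQ.
- exact: fQ.
- exact: (val_mono QP val).
Qed.


Lemma loc_fmono (P : D -> Prop) (pP : is_prime P) g n k :
  loc P (emb (f ^+ n) / emb g) -> (n <= k)%N -> loc P (emb (f ^+ k) / emb g).
Proof.
move=> hl hnk; rewrite -(subnK hnk) exprD embM -mulrA.
by apply: loc_M => //; apply: loc_emb.
Qed.

Lemma step2 : constructible_closed (@EE D) -> exists N, forall P, is_prime P ->
  is_valuation (loc P) -> (forall g, g \in gs -> P g) ->
  exists g, [/\ g \in gs, g != 0 & loc P (emb (f ^+ N) / emb g)].
Proof.
move=> hC; apply: NNPP => hno.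
have hP : forall N, exists Q : SP, [/\ EE Q, (forall g, g \in gs -> sval Q g) &
   ~ (exists g, [/\ g \in gs, g != 0 & loc (sval Q) (emb (f ^+ N) / emb g)])].
  move=> N; apply: NNPP => h; apply: hno; exists N => P pP vP hg.
  apply: NNPP => hn; apply: h; exists (exist _ P pP); split => //.
have [Pn hPn] := choice hP.
have [G [uG sG]] := @ultraFilterLemma nat eventually _.
pose Pp := fun x => G (fun N => sval (Pn N) x).
have gall : forall A : set nat, (forall N, A N) -> G A.
  by move=> A hA; apply: (filterS _ filterT) => N _; apply: hA.
have pPp : is_prime Pp.
  split; first split.
  - by apply: gall => N; apply: pr0; apply: (proj2_sig (Pn N)).
  - split.
      move=> x y hx hy; apply: (filterS _ (filterI hx hy)) => N [a b].
      by apply: prB => //; apply: (proj2_sig (Pn N)).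
    move=> a x hx; apply: (filterS _ hx) => N h.
    by apply: prMl => //; apply: (proj2_sig (Pn N)).
  split.
    move=> h1; apply: (filter_not_empty G); apply: (filterS _ h1) => N.
    exact: (pr1 (proj2_sig (Pn N))).
  move=> x y hxy.
  case: (in_ultra_setVsetC (fun N => sval (Pn N) x) uG) => hA; [by left|right].
  apply: (filterS _ (filterI hxy hA)) => N [h1 h2].
  by case: (prP (proj2_sig (Pn N)) h1).
have ultraN : forall k, ~ Pp k -> G (fun N => ~ sval (Pn N) k).
  move=> k nk; have [hA|hA] := in_ultra_setVsetC (fun N => sval (Pn N) k) uG.
    by exfalso; apply: nk.
  exact: hA.
have hgP : forall g, g \in gs -> Pp g.
  move=> g gin; apply: gall => N; have [_ h _] := hPn N; exact: h.
have EEP : is_valuation (loc Pp).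
  apply: NNPP => nE.
  have [hs [k [[bh bk] hq]]] := bas_of_open hC (P := exist _ Pp pPp) nE.
  have Gk := ultraN k bk.
  have Ghs : forall l : seq D, (forall h, h \in l -> Pp h) ->
      G (fun N => forall h, h \in l -> sval (Pn N) h).
    elim => [|h l IH] hl; first by apply: gall.
    have h1 := hl h (mem_head _ _).
    have h2 : G (fun N => forall y, y \in l -> sval (Pn N) y).
      by apply: IH => y yin; apply: hl; rewrite inE yin orbT.
    apply: (filterS _ (filterI h1 h2)) => N [a b] y.
    by rewrite inE => /orP [/eqP -> //|]; apply: b.
  have [N [a b]] := filter_ex (filterI (Ghs hs bh) Gk).
  have [EN _ _] := hPn N.
  by apply: (hq (Pn N)).
have [n [g [gin gnz hl]]] := step1 pPp EEP hgP.
have [a [s [ns e]]] := hl.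
have Gs := ultraN s ns.
have Gn : G (fun N => (n <= N)%N) by apply: sG; exists n => // N.
have [N [h1 h2]] := filter_ex (filterI Gs Gn).
have [_ _ hN] := hPn N; apply: hN; exists g; split => //.
apply: (loc_fmono (proj2_sig (Pn N)) _ h2).
by rewrite e; apply: loc_div.
Qed.

End Bwd.

Lemma zero_prime (D : idomainType) : is_prime (fun x : D => x = 0).
Proof.
split; first split => //.
  by split => [x y -> ->|a x ->]; rewrite ?subrr ?mulr0.
split; first by move/eqP; rewrite oner_eq0.
by move=> x y /eqP; rewrite mulf_eq0 => /orP [] /eqP; [left|right].
Qed.

Lemma ess_pvmd (D : idomainType) :
  essential D /\ constructible_closed (@EE D) -> PvMD D.
Proof.
move=> [[Fam [hF hD]] hC] m tm.
have pm := tmax_prime tm.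
have [im [zm|tcm]] := proj1 (t_idealE m) (proj1 tm).
  by move=> x _; left; apply: loc_all.
apply: NNPP => nv.
have [gs [f [[hgs nf] hq]]] := bas_of_open hC (P := exist _ m pm) nv.
have fnz := pr_nz pm nf.
have H' : forall Q : Spec D, (forall g, g \in gs -> sval Q g) ->
    ~ sval Q f -> EE Q -> False.
  by move=> Q a b; apply: (hq Q); split.
have hex : exists g, g \in gs /\ g != 0.
  apply: NNPP => hno; apply: (@H' (exist _ _ (zero_prime D))) => /=.
  - by move=> g gin; apply: NNPP => gnz; apply: hno; exists g; split => //; apply/eqP.
  - by move/eqP: fnz.
  - by move=> x _; left; apply: loc_all.
have [N hN] := step2 fnz hex H' hC.
have mfN : m (f ^+ N).
  apply: (tcm gs) => // u hu.
  apply/hD => V FV; have [_ [vv [p [pp hp]]]] := hF V FV.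
  have eV : V = loc p by rewrite predeqE.
  rewrite eV in vv *.
  have [hall|hnall] := classic (forall g, g \in gs -> p g).
    have [g [gin gnz hl]] := hN p pp vv hall.
    rewrite (fid_2 _ _ (emb_neq0 gnz)).
    by apply: loc_M => //; apply: loc_inD => //; apply: hu.
  have [g [gin npg]] : exists g, g \in gs /\ ~ p g.
    apply: NNPP => h; apply: hnall => g gin; apply: NNPP => npg; apply: h.
    by exists g.
  have [d ed] := hu g gin.
  have ge := emb_neq0 (pr_nz pp npg).
  have -> : u = emb d / emb g by rewrite -ed mulfK.
  by apply: loc_M => //; [apply: loc_emb|apply: loc_div].
by apply: nf; apply: (prX pm mfN).
Qed.

Theorem corollary2p6 (D : idomainType) :
  PvMD D <-> (essential D /\ constructible_closed (@EE D)).
Proof.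
split; last exact: ess_pvmd.
by move=> h; split; [apply: pvmd_ess|apply: pvmd_closed].
Qed.
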